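(* Consider two spiking neurons $\hat\sigma$ and $\tilde\sigma$ (same threshold $u_{th}$, reset $V_{reset}$, decay $\beta\in(0,1)$) with the same initial temporal input $\tilde h^0=\hat h^0$, receiving spatial input features $\hat x^t$ and $\tilde x^t$, $t=1,\dots,T$. Suppose $\hat u^T=\hat h^{T-1}+\hat x^T$ is a random variable following a $u_{th}$-Neighborhood-Finite Distribution, that $|\tilde x^t-\hat x^t|\le\epsilon$ for all $t=1,\dots,T$, and that $\hat\sigma^t(\hat x^t)=\tilde\sigma^t(\tilde x^t)$ for $t=1,\dots,T-1$. Then $P[\hat\sigma^T(\hat x^T)\neq\tilde\sigma^T(\tilde x^T)]$ has an upper bound proportional to $\frac{\epsilon}{1-\beta}$ (i.e. it is at most a constant multiple of $\frac{\epsilon}{1-\beta}$, the constant depending only on the distribution of $\hat u^T$).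
   Context: A LIF spiking neuron with firing threshold $u_{th}$, reset potential $V_{reset}$ and decay factor $\beta\in(0,1)$ receives spatial input features $x^1,x^2,\dots$ and evolves by $u^t=h^{t-1}+x^t$, $s^t=\mathrm{Hea}(u^t-u_{th})$, $h^t=V_{reset}s^t+\beta u^t(1-s^t)$, where $\mathrm{Hea}(y)=1$ if $y\ge0$ and $0$ otherwise; the output at timestep $t$ is written $\sigma^t(x^t)=s^t$ (it depends on earlier inputs through $h^{t-1}$). A probability density $p$ is an $m$-Neighborhood-Finite Distribution if there exists $\epsilon>0$ with $\sup_{x\in[m-\epsilon,m+\epsilon]}p(x)<+\infty$. *)

(* Defs.v *)
From HB Require Import structures.
From mathcomp Require Import all_boot all_order all_algebra.
From mathcomp Require Import all_classical all_reals all_analysis.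
Set Implicit Arguments. Unset Strict Implicit. Unset Printing Implicit Defensive.
Import Order.TTheory GRing.Theory Num.Theory.
Local Open Scope ring_scope.

Section LIF.
Variable R : realType.

(* Temporal state h^t of a LIF neuron with threshold uth, reset Vreset,
   decay beta, initial temporal input h0 and spatial inputs x 1, x 2, ...
   (x 0 is unused):
     h^0 = h0,  u^t = h^{t-1} + x^t,  s^t = Hea(u^t - uth),
     h^t = Vreset s^t + beta u^t (1 - s^t). *)
Fixpoint lif_h (uth Vreset beta h0 : R) (x : nat -> R) (t : nat) : R :=
  match t with
  | 0 => h0
  | t'.+1 =>
      let u := lif_h uth Vreset beta h0 x t' + x t'.+1 in
      let s : R := if uth <= u then 1 else 0 in
      Vreset * s + beta * u * (1 - s)
  end.

Definition lif_u (uth Vreset beta h0 : R) (x : nat -> R) (t : nat) : R :=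
  lif_h uth Vreset beta h0 x t.-1 + x t.

Definition Hea (y : R) : R := if 0 <= y then 1 else 0.

Definition lif_spike (uth Vreset beta h0 : R) (x : nat -> R) (t : nat) : R :=
  Hea (lif_u uth Vreset beta h0 x t - uth).

Definition neighborhood_finite (p : R -> R) (m : R) : Prop :=
  exists e : R, 0 < e /\ exists M : R, forall x : R, m - e <= x <= m + e -> p x <= M.

End LIF.

(* Main.v *)
Require Import Defs.
From HB Require Import structures.
From mathcomp Require Import all_boot all_order all_algebra.
From mathcomp Require Import all_classical all_reals all_analysis.
From mathcomp Require Import measurable_realfun.
From mathcomp Require Import ring lra.
Import Order.TTheory GRing.Theory Num.Theory.
Local Open Scope classical_set_scope.
Local Open Scope ring_scope.

Lemma lif_h_meas (R : realType) d (Omega : measurableType d) (uth Vreset beta : R)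
  (h0 : Omega -> R) (x : Omega -> nat -> R) :
  measurable_fun setT h0 -> (forall t, measurable_fun setT (fun w => x w t)) ->
  forall t, measurable_fun setT (fun w => lif_h uth Vreset beta (h0 w) (x w) t).
Proof.
move=> mh mx; elim=> [|t IH] //=.
have mu : measurable_fun setT (fun w => lif_h uth Vreset beta (h0 w) (x w) t + x w t.+1).
  exact: measurable_realfun.measurable_funD.
have ms : measurable_fun setT (fun w => if uth <= lif_h uth Vreset beta (h0 w) (x w) t + x w t.+1 then (1:R) else 0).
  apply: measurable_fun_ifT => //.
  by apply: measurable_realfun.measurable_fun_ler => //.
apply: measurable_realfun.measurable_funD; first by apply: measurable_realfun.measurable_funM.
apply: measurable_realfun.measurable_funM; first by apply: measurable_realfun.measurable_funM.
exact: measurable_realfun.measurable_funB.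
Qed.

Lemma lif_u_meas (R : realType) d (Omega : measurableType d) (uth Vreset beta : R)
  (h0 : Omega -> R) (x : Omega -> nat -> R) :
  measurable_fun setT h0 -> (forall t, measurable_fun setT (fun w => x w t)) ->
  forall t, measurable_fun setT (fun w => lif_u uth Vreset beta (h0 w) (x w) t).
Proof.
move=> mh mx t; rewrite /lif_u; apply: measurable_realfun.measurable_funD => //.
exact: lif_h_meas.
Qed.

Lemma hea_eq (R : realType) (a b : R) : (Hea a = Hea b) <-> ((0 <= a) = (0 <= b)).
Proof.
rewrite /Hea; split; case: (0 <= a); case: (0 <= b) => //.
- by move/eqP; rewrite oner_eq0.
- by move/esym/eqP; rewrite oner_eq0.
Qed.

Lemma lif_diff (R : realType) (uth Vreset beta eps h0 : R) (xh xt : nat -> R) (T : nat) :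
  0 <= beta < 1 -> 0 <= eps ->
  (forall t, (1 <= t <= T)%N -> `|xt t - xh t| <= eps) ->
  (forall t, (1 <= t < T)%N ->
       lif_spike uth Vreset beta h0 xh t = lif_spike uth Vreset beta h0 xt t) ->
  forall t, (t < T)%N ->
  `|lif_h uth Vreset beta h0 xt t - lif_h uth Vreset beta h0 xh t| <= eps * beta / (1 - beta).
Proof.
move=> /andP[b0 b1] e0 hx hs; elim=> [|t IH] ht /=.
  by rewrite subrr normr0; apply: divr_ge0; [exact: mulr_ge0|rewrite subr_ge0 ltW].
have := hs t.+1 ht; rewrite /lif_spike /lif_u /= => /hea_eq.
rewrite !subr_ge0 => ->.
case: ifP => _.
  by rewrite !mulr1 !subrr !mulr0 !addr0 subrr normr0; apply: divr_ge0; [exact: mulr_ge0|rewrite subr_ge0 ltW].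
rewrite !mulr0 !subr0 !mulr1 !add0r -mulrBr normrM ger0_norm //.
have IH' := IH (ltnW ht).
have hxt := hx t.+1 (ltnW ht).
have H1 : `|lif_h uth Vreset beta h0 xt t + xt t.+1 - (lif_h uth Vreset beta h0 xh t + xh t.+1)| <= eps * beta / (1 - beta) + eps.
  rewrite opprD addrACA; apply: le_trans (ler_normD _ _) _; exact: lerD.
apply: le_trans (ler_wpM2l b0 H1) _.
have nb : 0 < 1 - beta by rewrite subr_gt0.
rewrite le_eqVlt; apply/orP; left; apply/eqP; field; exact: lt0r_neq0.
Qed.

Theorem lemma3 (R : realType) (uth : R) (p : R -> R)
  (p_ge0 : forall x, 0 <= p x)
  (p_meas : measurable_fun setT p)
  (p_nf : neighborhood_finite p uth) :
  exists C : R,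
  forall (Vreset beta eps : R) (T : nat)
    (d : measure_display) (Omega : measurableType d) (P : probability Omega R)
    (h0 : Omega -> R) (xhat xtil : Omega -> nat -> R),
    0 < beta < 1 ->
    (1 <= T)%N ->
    measurable_fun setT h0 ->
    (forall t, measurable_fun setT (fun w => xhat w t)) ->
    (forall t, measurable_fun setT (fun w => xtil w t)) ->
    (* u-hat^T has density p *)
    (forall A : set R, measurable A ->
       P [set w | lif_u uth Vreset beta (h0 w) (xhat w) T \in A]
       = (\int[lebesgue_measure]_(x in A) (p x)%:E)%E) ->
    (forall w t, (1 <= t <= T)%N -> `|xtil w t - xhat w t| <= eps) ->
    (forall w t, (1 <= t < T)%N ->
       lif_spike uth Vreset beta (h0 w) (xhat w) t
       = lif_spike uth Vreset beta (h0 w) (xtil w) t) ->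
    (P [set w | lif_spike uth Vreset beta (h0 w) (xhat w) T
               != lif_spike uth Vreset beta (h0 w) (xtil w) T]
     <= (C * (eps / (1 - beta)))%:E)%E.
Proof.
case: p_nf => e [e0 [M hM]].
pose M' := Num.max M 0.
have M'0 : 0 <= M' by rewrite le_max lexx orbT.
have MM' : M <= M' by rewrite le_max lexx.
exists (2 * M' + e^-1).
move=> Vreset beta eps T d Omega P h0 xhat xtil /andP[b0 b1] T1 mh mxh mxt hdens hx hs.
have eps0 : 0 <= eps.
  rewrite leNgt; apply/negP => en.
  have : P setT = 0%E.
    rewrite (_ : setT = set0) ?measure0 //.
    apply/seteqP; split=> w _ //=.
    have := hx w T; rewrite T1 leqnn => /(_ isT) H.
    have := le_lt_trans (normr_ge0 _) (le_lt_trans H en); by rewrite ltxx.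
  by rewrite probability_setT => /eqP; rewrite eqe oner_eq0.
have nb : 0 < 1 - beta by rewrite subr_gt0.
set del := eps / (1 - beta).
have del0 : 0 <= del by rewrite divr_ge0 // ltW.
set uh := fun w => lif_u uth Vreset beta (h0 w) (xhat w) T.
set ut := fun w => lif_u uth Vreset beta (h0 w) (xtil w) T.
have hdiff : forall w, `|ut w - uh w| <= del.
  move=> w; rewrite /ut /uh /lif_u.
  have H1 := @lif_diff R uth Vreset beta eps (h0 w) (xhat w) (xtil w) T
     (ltac:(by rewrite ltW // b1)) eps0 (hx w) (hs w).
  have H2 := H1 T.-1 (ltac:(by rewrite prednK // ?ltnSn ?leqnn ?ltn_predL // -lt0n)).
  have H3 := hx w T (ltac:(by rewrite T1 leqnn)).
  rewrite opprD addrACA; apply: le_trans (ler_normD _ _) _.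
  apply: le_trans (lerD H2 H3) _.
  rewrite /del le_eqVlt; apply/orP; left; apply/eqP; field; exact: lt0r_neq0.
set I := [set` `[uth - del, uth + del]] : set R.
have sub : [set w | lif_spike uth Vreset beta (h0 w) (xhat w) T
               != lif_spike uth Vreset beta (h0 w) (xtil w) T]
           `<=` [set w | uh w \in I].
  move=> w /=; rewrite /lif_spike -/(uh w) -/(ut w) => hne.
  rewrite inE /I /= in_itv /=.
  have := hdiff w; rewrite /Hea in hne.
  move: hne; rewrite !subr_ge0.
  case: (lerP uth (uh w)); case: (lerP uth (ut w)) => h1 h2; rewrite ?eqxx //= => _.

  1,2: rewrite ler_norml => /andP[ha hb]; apply/andP; split; lra.
have mI : measurable I by apply: measurable_itv.
have mbad : measurable [set w | lif_spike uth Vreset beta (h0 w) (xhat w) T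
               != lif_spike uth Vreset beta (h0 w) (xtil w) T].
  have msp : forall x : Omega -> nat -> R, (forall t, measurable_fun setT (fun w => x w t)) ->
      measurable_fun setT (fun w => lif_spike uth Vreset beta (h0 w) (x w) T).
    move=> x mx; rewrite /lif_spike /Hea.
    apply: measurable_fun_ifT => //.
    apply: measurable_fun_ler => //.
    apply: measurable_funB => //; exact: lif_u_meas.
  have meq := measurable_fun_eqr (msp _ mxh) (msp _ mxt).
  rewrite (_ : [set w | _ != _] = ~` ((fun w => lif_spike uth Vreset beta (h0 w) (xhat w) T
               == lif_spike uth Vreset beta (h0 w) (xtil w) T) @^-1` [set true])).
    apply: measurableC; rewrite -(setTI (_ @^-1` _)); exact: meq measurableT _ _.
  by apply/seteqP; split=> w /=; case: eqP.
have mpre : measurable [set w | uh w \in I].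
  have mu : measurable_fun setT uh by exact: lif_u_meas.
  rewrite (_ : [set w | uh w \in I] = uh @^-1` I); last by apply/seteqP; split=> w; rewrite /= inE.
  rewrite -(setTI (uh @^-1` I)); exact: mu measurableT _ mI.
apply: (@le_trans _ _ (P [set w | uh w \in I])).
  by apply: le_measure; rewrite ?inE.
case: (lerP del e) => hde; last first.
  apply: le_trans (probability_le1 P mpre) _; rewrite lee_fin.
  have h1 : 1 <= del / e by rewrite ler_pdivlMr // mul1r ltW.
  rewrite mulrDl [e^-1 * del]mulrC; apply: le_trans h1 _; rewrite lerDr.
  by apply: mulr_ge0 => //; apply: mulr_ge0.
rewrite (_ : P [set w | uh w \in I] = (\int[lebesgue_measure]_(x in I) (p x)%:E)%E); last exact: hdens.
have mp : measurable_fun I (EFin \o p).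
  apply: measurableT_comp => //; exact: measurable_funS p_meas.
apply: le_trans (@ge0_le_integral _ _ _ lebesgue_measure I mI _ (fun=> M'%:E) _ mp _ _) _.
- by move=> x _; rewrite lee_fin.
- exact: measurable_cst.
- move=> x; rewrite /I /= in_itv /= => /andP[ha hb]; rewrite lee_fin.
  apply: le_trans MM'; apply: hM; apply/andP; split; lra.
rewrite (integral_cst lebesgue_measure mI M'%:E) /I.
set m := (X in (_ * X <= _)%E).
have -> : m = (if ((uth - del)%:E < (uth + del)%:E)%E then ((uth + del)%:E - (uth - del)%:E)%E else 0%E) by exact: lebesgue_measure_itv.
case: ifP => _.
  rewrite -EFinB -EFinM lee_fin.
  have -> : uth + del - (uth - del) = 2 * del by ring.
  have h : 0 <= e^-1 * del by rewrite mulr_ge0 // invr_ge0 ltW.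
  rewrite [X in X <= _](_ : _ = 2 * M' * del); last by ring.
  by rewrite [X in _ <= X]mulrDl -[X in X <= _]addr0 lerD2l.
rewrite (_ : (M'%:E * 0%R)%E = 0%:E); last by rewrite mule0.
rewrite lee_fin; apply: mulr_ge0 => //; apply: addr_ge0.
  by apply: mulr_ge0.
by rewrite invr_ge0 ltW.
Qed.
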